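(* Let $G$ be a connected block graph with blocks $B_1, B_2,\ldots, B_t$, and let $k\ge 2$ be an integer. Then $$SW_k(G) = \sum_{i=1}^t N_k'(G \setminus B_i).$$
   Context: All graphs are finite, simple, undirected. A block of a graph is a maximal connected induced subgraph without cut vertices; a block graph is a graph in which every block is a complete graph (clique). For a connected graph $G$ and $S\subseteq V(G)$, the Steiner distance $d(S)$ is the minimum number of edges of a connected subgraph of $G$ whose vertex set contains $S$. The Steiner $k$-Wiener index is $SW_k(G)=\sum_{S\subseteq V(G),\,|S|=k} d(S)$. For a block $B_i$, $G\setminus B_i$ denotes the graph obtained from $G$ by deleting all edges of $B_i$ (keeping all vertices). For a graph $H$ with connected components $H_1,\dots,H_p$ (with $n(H_j)=|V(H_j)|$), and a tuple $(l_1,\dots,l_p)$ of nonnegative integers, let $\alpha(l_1,\dots,l_p)$ be the number of nonzero $l_j$ minus $1$. Define $$N_k'(H)=\sum_{\substack{l_1+\cdots+l_p=k\\ 0\le l_1,\dots,l_p<k}} \binom{n(H_1)}{l_1}\cdots\binom{n(H_p)}{l_p}\,\alpha(l_1,\dots,l_p)$$ if $p>1$, and $N_k'(H)=0$ if $H$ is connected. Conventions: $\binom{m}{0}=1$ and $\binom{m}{l}=0$ whenever $m<l$. *)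

(* Defs.v *)
From mathcomp Require Import all_boot.
Set Implicit Arguments. Unset Strict Implicit. Unset Printing Implicit Defensive.

Definition simple_graph (T : finType) (e : rel T) : Prop :=
  symmetric e /\ irreflexive e.

Definition connected_graph (T : finType) (e : rel T) : bool :=
  [forall x, forall y, connect e x y].

Definition induced_rel (T : finType) (e : rel T) (A : {set T}) : rel T :=
  fun x y => [&& e x y, x \in A & y \in A].

Definition induced_connected (T : finType) (e : rel T) (A : {set T}) : bool :=
  [forall x in A, forall y in A, connect (induced_rel e A) x y].

Definition cut_vertex_of (T : finType) (e : rel T) (A : {set T}) (v : T) : bool :=
  (v \in A) && ~~ induced_connected e (A :\ v).

Definition nonseparable (T : finType) (e : rel T) (A : {set T}) : bool :=
  induced_connected e A && [forall v, ~~ cut_vertex_of e A v].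

Definition is_block (T : finType) (e : rel T) (B : {set T}) : bool :=
  [&& B != set0, nonseparable e B &
      [forall B' : {set T}, (B \proper B') ==> ~~ nonseparable e B']].

Definition block_graph (T : finType) (e : rel T) : bool :=
  [forall B : {set T}, is_block e B ==>
     [forall x in B, forall y in B, (x != y) ==> e x y]].

(* G \ B : delete the edges of the block B (all vertices kept). *)
Definition del_block_edges (T : finType) (e : rel T) (B : {set T}) : rel T :=
  fun x y => e x y && ~~ ((x \in B) && (y \in B)).

(* Edges are represented as 2-element vertex sets.
   The default value #|{set T}| is an upper bound for #|F| for every
   candidate F, so it does not affect the minimum when one exists. *)
Definition steiner_admissible (T : finType) (e : rel T) (S : {set T})
    (p : {set T} * {set {set T}}) : bool :=
  let U := p.1 in let F := p.2 in
  [&& S \subset U,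
      [forall f in F, exists x, exists y,
          [&& f == [set x; y], e x y, x \in U & y \in U]] &
      [forall x in U, forall y in U,
          connect (fun a b => [set a; b] \in F) x y]].

Definition steiner_dist (T : finType) (e : rel T) (S : {set T}) : nat :=
  \big[minn/#|{set T}|]_(p : {set T} * {set {set T}} | steiner_admissible e S p)
     #|p.2|.

Definition steiner_wiener (T : finType) (e : rel T) (k : nat) : nat :=
  \sum_(S : {set T} | #|S| == k) steiner_dist e S.

Definition components (T : finType) (e : rel T) : {set {set T}} :=
  [set [set y | connect e x y] | x : T].

(* N'_k(H): tuples (l_C)_{C component} with 0 <= l_C < k (encoded as a
   finite function into 'I_k, zero outside the components) summing to k,
   weighted by prod_C binom(|C|, l_C) * (#{C | l_C <> 0} - 1). *)
Definition Nprime (T : finType) (h : rel T) (k : nat) : nat :=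
  let C := components h in
  if 1 < #|C| then
    \sum_(l : {ffun {set T} -> 'I_k} |
            [forall X, (X \notin C) ==> (val (l X) == 0)] &&
            (\sum_(X in C) val (l X) == k))
      ((\prod_(X in C) 'C(#|X|, val (l X))) *
       (#|[set X in C | val (l X) != 0]| - 1))
  else 0.

(* Main.v *)
Require Import Defs.
From mathcomp Require Import all_boot zify.
Set Implicit Arguments. Unset Strict Implicit. Unset Printing Implicit Defensive.

Section General.
Variable T : finType.
Implicit Types (e r : rel T) (A B R V : {set T}).

Lemma csym r : symmetric r -> symmetric (connect r).
Proof. exact: sym_connect_sym. Qed.

Lemma induced_sym e A : symmetric e -> symmetric (induced_rel e A).
Proof. by move=> se x y; rewrite /induced_rel se; case: (x \in A); case: (y \in A); rewrite ?andbF. Qed.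

Lemma connect_neq_mem r R x y : symmetric r -> (forall a b, r a b -> a \in R) ->
  connect r x y -> x != y -> (x \in R) && (y \in R).
Proof.
move=> sr rR cxy nxy; apply/andP; split.
  case/connectP: cxy nxy => [[|z p] /= ]; first by move=> _ ->; rewrite eqxx.
  by case/andP=> /rR.
move: cxy nxy; rewrite csym // eq_sym.
case/connectP => [[|z p] /= ]; first by move=> _ ->; rewrite eqxx.
by case/andP=> /rR.
Qed.

Lemma induced_mem e A x y : symmetric e ->
  connect (induced_rel e A) x y -> x != y -> (x \in A) && (y \in A).
Proof.
move=> se; apply: connect_neq_mem; first exact: induced_sym.
by move=> a b /and3P[].
Qed.

Lemma induced_connected_root e A (z0 : T) : symmetric e -> z0 \in A ->
  (forall x, x \in A -> connect (induced_rel e A) z0 x) -> induced_connected e A.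
Proof.
move=> se rA H; apply/forallP => x; apply/implyP => xA; apply/forallP => y; apply/implyP => yA.
apply: (connect_trans (y:=z0)); last exact: H.
by rewrite csym ?H //; apply: induced_sym.
Qed.

Lemma induced_mono e A B x y : A \subset B ->
  connect (induced_rel e A) x y -> connect (induced_rel e B) x y.
Proof.
move=> AB; apply: connect_sub => a b /and3P[eab aA bA]; apply: connect1.
by rewrite /induced_rel eab (subsetP AB _ aA) (subsetP AB _ bA).
Qed.

Lemma path_induced e A x p : path e x p -> {subset x :: p <= A} ->
  path (induced_rel e A) x p.
Proof.
elim: p x => //= y p IH x /andP[exy pp] sub; rewrite /induced_rel exy.
rewrite sub ?inE ?eqxx // sub ?inE ?eqxx ?orbT //=.
by apply: IH => // z zin; apply: sub; rewrite inE zin orbT.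
Qed.

Lemma path_conn_induced e A x p : path e x p -> {subset x :: p <= A} ->
  forall y, y \in x :: p -> connect (induced_rel e A) x y.
Proof. by move=> pp sub; apply: path_connect; apply: path_induced. Qed.

Lemma path_remove e V v x p : symmetric e -> v \notin V -> path e x p ->
  uniq (x :: p) -> {subset x :: p <= v |: V} ->
  forall y, y \in x :: p -> y != v ->
  connect (induced_rel e V) x y \/ connect (induced_rel e V) y (last x p).
Proof.
move=> se vV; elim: p x => [|z p IH] x /=.
  by move=> _ _ _ y; rewrite inE => /eqP -> _; left.
case/andP=> exz pp /andP[xnin up] sub y yin yv.
have subz : {subset z :: p <= v |: V} by move=> a ain; apply: sub; rewrite inE ain orbT.
have [yx|yx] := eqVneq y x; first by left; rewrite yx.
have yin' : y \in z :: p by move: yin; rewrite inE (negbTE yx).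
have [xv|xv] := eqVneq x v.
  right; have subV : {subset z :: p <= V}.
    move=> a ain; have := sub a; rewrite inE ain orbT => /(_ isT).
    by rewrite !inE => /orP[av|//]; move: xnin; rewrite xv -(eqP av) ain.
  apply: (connect_trans (y:=z)); last exact: (path_conn_induced pp subV (mem_last _ _)).
  by rewrite csym; [exact: (path_conn_induced pp subV yin')|exact: induced_sym].
have xV : x \in V.
  by have := sub x (mem_head _ _); rewrite !inE (negbTE xv).
case: (IH z pp up subz y yin' yv) => [czy|]; last by right.
have [zv|zv] := eqVneq z v.
  by have := induced_mem se czy; rewrite zv (negbTE vV) eq_sym yv => /(_ isT).
have zV : z \in V.
  by have := subz z (mem_head _ _); rewrite !inE (negbTE zv).
left; apply: (connect_trans (y:=z)) => //; apply: connect1.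
by rewrite /induced_rel exz xV zV.
Qed.

Lemma crossing r R x y : connect r x y -> x \in R -> y \notin R ->
  exists a b, [/\ a \in R, b \notin R & r a b].
Proof.
case/connectP => p; elim: p x => [|z p IH] x /=; first by move=> _ -> ->.
case/andP=> rxz pp ly xR yR.
case zR: (z \in R); first exact: IH pp ly zR yR.
by exists x, z; rewrite zR.
Qed.

Definition inside (E : {set {set T}}) R := [set f in E | f \subset R].

Lemma grow_edges (E : {set {set T}}) d0 :
  #|[set x | connect (fun a b => [set a; b] \in E) d0 x]| <= #|E| + 1.
Proof.
set r := (fun a b => [set a; b] \in E).
set Rch := [set x | connect r d0 x].
suff H : forall n R, #|Rch :\: R| <= n -> R \subset Rch -> d0 \in R ->
    #|R| <= #|inside E R| + 1 -> #|Rch| <= #|inside E Rch| + 1.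
  have H1 : #|Rch| <= #|inside E Rch| + 1.
    apply: (H _ [set d0] (leqnn _)).
    - by rewrite sub1set inE connect0.
    - by rewrite inE.
    - by rewrite cards1 leq_addl.
  apply: leq_trans H1 _.
  by rewrite leq_add2r; apply: subset_leq_card; apply/subsetP => f; rewrite inE => /andP[].
elim=> [|n IH] R.
  rewrite leqn0 cards_eq0 setD_eq0 => RchR RRch _ H.
  by have -> : Rch = R by apply/eqP; rewrite eqEsubset RchR RRch.
move=> cardn RRch d0R HR.
have [RchR|] := boolP (Rch \subset R).
  by have -> : Rch = R by apply/eqP; rewrite eqEsubset RchR RRch.
case/subsetPn => y yRch yR.
have [a [b [aR bR rab]]] : exists a b, [/\ a \in R, b \notin R & r a b].
  have c : connect r d0 y by move: yRch; rewrite inE.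
  exact: crossing c d0R yR.
have bRch : b \in Rch.
  rewrite inE; apply: (connect_trans (y:=a)); last exact: connect1.
  by move: (subsetP RRch a aR); rewrite inE.
apply: (IH (b |: R)).
- have : #|Rch :\: (b |: R)| < #|Rch :\: R|.
    apply: proper_card; rewrite properE; apply/andP; split.
      by apply: setDS; apply: subsetUr.
    by apply/subsetPn; exists b; [rewrite in_setD bR bRch|rewrite in_setD setU11].
  by move=> H; rewrite -ltnS; apply: leq_trans H cardn.
- by rewrite subUset sub1set bRch RRch.
- by rewrite inE d0R orbT.
rewrite cardsU1 bR add1n addn1 ltnS.
apply: leq_trans HR _; rewrite addn1; apply: proper_card.
rewrite properE; apply/andP; split.
  apply/subsetP => f; rewrite !inE => /andP[-> fR]; rewrite (subset_trans fR) //.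
  exact: subsetUr.
have rab' : [set a; b] \in E := rab.
apply/subsetPn; exists [set a; b].
  by rewrite inE rab' /= subUset !sub1set !inE eqxx aR orbT.
by rewrite inE rab' /= subUset !sub1set (negbTE bR) andbF.
Qed.

End General.
Section Blocks.
Variable T : finType.
Variable e : rel T.
Hypothesis se : symmetric e.
Hypothesis ie : irreflexive e.
Hypothesis bg : block_graph e.
Implicit Types (A B V : {set T}).

Definition hB B := del_block_edges e B.

Lemma hB_sym B : symmetric (hB B).
Proof. by move=> x y; rewrite /hB /del_block_edges se; case: (x \in B); case: (y \in B). Qed.

Lemma hB_e B x y : hB B x y -> e x y.
Proof. by case/andP. Qed.

Lemma clique B x y : is_block e B -> x \in B -> y \in B -> x != y -> e x y.
Proof.
move=> bB xB yB nxy; have := forallP bg B; rewrite bB /= => /forallP/(_ x).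
by rewrite xB /= => /forallP/(_ y); rewrite yB nxy.
Qed.

Lemma clique_conn A : (forall x y, x \in A -> y \in A -> x != y -> e x y) ->
  induced_connected e A.
Proof.
move=> cl; apply/forallP => x; apply/implyP => xA; apply/forallP => y; apply/implyP => yA.
have [->|nxy] := eqVneq x y; first exact: connect0.
by apply: connect1; rewrite /induced_rel xA yA (cl x y xA yA nxy).
Qed.

Lemma clique_nonsep A : (forall x y, x \in A -> y \in A -> x != y -> e x y) ->
  nonseparable e A.
Proof.
move=> cl; rewrite /nonseparable clique_conn //=; apply/forallP => v.
rewrite /cut_vertex_of negb_and negbK clique_conn ?orbT // => x y.
by rewrite !in_setD1 => /andP[_ xA] /andP[_ yA]; apply: cl.
Qed.

Lemma nonsep_del A v : nonseparable e A -> induced_connected e (A :\ v).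
Proof.
case/andP=> cA /forallP/(_ v); rewrite /cut_vertex_of negb_and negbK.
case/orP => // vA.
by have -> : A :\ v = A by apply/setP=> z; rewrite in_setD1; case: eqVneq => // ->; rewrite (negbTE vA).
Qed.

Lemma union_conn A1 A2 r : r \in A1 -> r \in A2 -> induced_connected e A1 ->
  induced_connected e A2 -> induced_connected e (A1 :|: A2).
Proof.
move=> r1 r2 c1 c2; apply: (induced_connected_root (z0:=r)) => //.
  by rewrite inE r1.
move=> x; rewrite inE => /orP[xA|xA].
  apply: (induced_mono (A:=A1)); first exact: subsetUl.
  by have := forallP c1 r; rewrite r1 => /forallP/(_ x); rewrite xA.
apply: (induced_mono (A:=A2)); first exact: subsetUr.
by have := forallP c2 r; rewrite r2 => /forallP/(_ x); rewrite xA.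
Qed.

Lemma union_nonsep A1 A2 x y : nonseparable e A1 -> nonseparable e A2 -> x != y ->
  x \in A1 -> y \in A1 -> x \in A2 -> y \in A2 -> nonseparable e (A1 :|: A2).
Proof.
move=> n1 n2 nxy x1 y1 x2 y2; apply/andP; split.
  by apply: (union_conn (r:=x)) => //; [case/andP: n1|case/andP: n2].
apply/forallP => v; rewrite /cut_vertex_of negb_and negbK; apply/orP; right.
rewrite setDUl; set r := if v == x then y else x.
have rv : r != v by rewrite /r; case: (eqVneq v x) => [->|vx]; rewrite eq_sym.
have r1 : r \in A1 :\ v by rewrite in_setD1 rv /r; case: (v == x).
have r2 : r \in A2 :\ v by rewrite in_setD1 rv /r; case: (v == x).
by apply: (union_conn r1 r2); apply: nonsep_del.
Qed.

Lemma block_unique B1 B2 x y : is_block e B1 -> is_block e B2 -> x != y ->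
  x \in B1 -> y \in B1 -> x \in B2 -> y \in B2 -> B1 = B2.
Proof.
move=> b1 b2 nxy x1 y1 x2 y2.
have nU : nonseparable e (B1 :|: B2) by apply: (union_nonsep (x:=x) (y:=y)) => //;
  [case/and3P: b1|case/and3P: b2].
have sub : forall C D, is_block e C -> nonseparable e (C :|: D) -> D \subset C.
  move=> C D /and3P[_ _ /forallP/(_ (C :|: D))] + nCD.
  rewrite nCD implybF properE subsetUl /= negbK.
  by move/subsetP => H; apply/subsetP => z zD; apply: H; rewrite inE zD orbT.
apply/eqP; rewrite eqEsubset (sub _ _ b2) 1?setUC ?(sub _ _ b1) //.
Qed.

Lemma block_exists x y : e x y -> exists B, [/\ is_block e B, x \in B & y \in B].
Proof.
move=> exy.
have P0 : nonseparable e [set x; y] && ([set x; y] \subset [set x; y]).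
  rewrite subxx andbT; apply: clique_nonsep => a b.
  rewrite !inE => /orP[]/eqP-> /orP[]/eqP->; rewrite ?eqxx //.
  by rewrite se.
case: (@arg_maxnP _ [set x; y] (fun B => nonseparable e B && ([set x; y] \subset B))
   (fun B => #|B|) P0) => B /andP[nB sB] maxB.
exists B; have xB : x \in B by apply: (subsetP sB); rewrite !inE eqxx.
have yB : y \in B by apply: (subsetP sB); rewrite !inE eqxx orbT.
split=> //; apply/and3P; split => //.
  by apply/set0Pn; exists x.
apply/forallP => B'; apply/implyP => pB'; apply/negP => nB'.
have := maxB B'; rewrite nB' (subset_trans sB (proper_sub pB')) => /(_ isT).
by rewrite /geq /= leqNgt proper_card.
Qed.

Lemma first_in (P : pred T) (p : seq T) : has P p ->
  exists q w r, [/\ p = q ++ w :: r, P w & all (predC P) q].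
Proof.
elim: p => //= y p IH /orP[Py|hp].
  by exists [::], y, p.
case Py: (P y).
  by exists [::], y, p.
have [q [w [r [-> Pw aq]]]] := IH hp.
by exists (y :: q), w, r; rewrite /= Py.
Qed.

Lemma branch_sep B b b' : is_block e B -> b \in B -> b' \in B ->
  connect (hB B) b b' -> b = b'.
Proof.
move=> bB bin b'in /connectP[p0 pp0 lp0].
apply/eqP; apply/negPn/negP => nbb'.
move: b'in nbb'; rewrite lp0; case: (shortenP pp0) => p pp up _ b'in nbb'.
have hasp : has (mem B) p.
  apply/hasP; exists (last b p) => //; move: (mem_last b p); rewrite inE eq_sym.
  by rewrite (negbTE nbb').
have [q [w [r1 [pdef wB aq]]]] := first_in hasp.
have {}wB : w \in B := wB.
rewrite pdef in pp up.
have ppq : path (hB B) b (rcons q w).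
  by move: pp; rewrite cat_path /= -cats1 cat_path /= => /and3P[-> -> _]; rewrite andbT.
have ppe : path e b (rcons q w) by apply: sub_path ppq => ? ?; apply: hB_e.
have uL : uniq (b :: rcons q w).
  have E : b :: q ++ w :: r1 = (b :: rcons q w) ++ r1 by rewrite /= -cats1 -catA.
  by move: up; rewrite E cat_uniq => /andP[].
have wb : w != b.
  by move: uL; rewrite /= mem_rcons inE negb_or eq_sym => /andP[/andP[]].
have qne : q != [::].
  apply/negP => /eqP q0; move: ppq; rewrite q0 /= andbT /hB /del_block_edges.
  by rewrite bin wB andbF.
set A := B :|: [set z in q].
have LA : {subset b :: rcons q w <= A}.
  move=> z; rewrite inE mem_rcons inE orbA => /orP[/orP[]/eqP->|zq].
  - by rewrite inE bin.
  - by rewrite inE wB.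
  by rewrite !inE zq orbT.
have BA : B \subset A by exact: subsetUl.
have clA : forall (V : {set T}) r0 z, r0 \in B -> z \in B -> r0 \in V -> z \in V ->
    connect (induced_rel e V) r0 z.
  move=> V r0 z rB zB rV zV; have [->|nrz] := eqVneq r0 z; first exact: connect0.
  by apply: connect1; rewrite /induced_rel rV zV (clique bB rB zB nrz).
have nA : nonseparable e A.
  apply/andP; split.
    apply: (induced_connected_root (z0:=b)) => //; first by rewrite inE bin.
    move=> z; rewrite inE => /orP[zB|zq].
      by apply: clA => //; rewrite inE ?bin ?zB.
    apply: (path_conn_induced ppe LA); rewrite inE mem_rcons inE.
    by move: zq; rewrite inE => ->; rewrite !orbT.
  apply/forallP => v; rewrite /cut_vertex_of negb_and negbK; apply/orP; right.
  set V := A :\ v; set r := if v == b then w else b.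
  have vV : v \notin V by rewrite in_setD1 eqxx.
  have rB : r \in B by rewrite /r; case: (v == b).
  have rv : r != v by rewrite /r; case: (eqVneq v b) => [->|vb] //; rewrite eq_sym.
  have rV : r \in V by rewrite in_setD1 rv (subsetP BA).
  apply: (induced_connected_root (z0:=r)) => //.
  move=> z zV; move: (zV); rewrite in_setD1 => /andP[zv]; rewrite inE => /orP[zB|zq].
    exact: clA.
  have zL : z \in b :: rcons q w.
    by rewrite inE mem_rcons inE; move: zq; rewrite inE => ->; rewrite !orbT.
  have LV : {subset b :: rcons q w <= v |: V}.
    move=> a /LA aA; rewrite !inE; case: eqVneq => //= _.
    by move: aA; rewrite !inE.
  have := path_remove se vV ppe uL LV zL zv; rewrite last_rcons.
  rewrite /r; case: eqVneq => [vb|vb].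
    case=> [cbz|czw]; last by rewrite csym //; apply: induced_sym.
    by have := induced_mem se cbz; rewrite -vb (negbTE vV) eq_sym zv => /(_ isT).
  case=> // czw; have [wv|wv] := eqVneq w v.
    have := induced_mem se czw; rewrite wv (negbTE vV) andbF.
    by rewrite zv => /(_ isT).
  have wV : w \in V by rewrite in_setD1 wv (subsetP BA).
  apply: (connect_trans (y:=w)); first by apply: clA => //; rewrite in_setD1 eq_sym vb (subsetP BA).
  by rewrite csym //; apply: induced_sym.
have pBA : B \proper A.
  have [z0 z0q] : exists z0, z0 \in q.
    by case: (q) qne => // z0 ? _; exists z0; rewrite inE eqxx.
  have z0B := allP aq z0 z0q.
  rewrite properE BA /=; apply/subsetPn; exists z0; last by [].
  by rewrite !inE z0q orbT.
by case/and3P: bB => _ _ /forallP/(_ A); rewrite pBA nA.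
Qed.

Lemma branch_exists B v : connected_graph e -> is_block e B ->
  exists2 b, b \in B & connect (hB B) v b.
Proof.
move=> cg /and3P[/set0Pn[b0 b0B] _ _].
have := forallP cg v => /forallP/(_ b0) /connectP[p pp lp].
elim: p v pp lp => [|y p IH] v /=; first by move=> _ lp; exists v; [rewrite -lp|exact: connect0].
case/andP=> evy pp lp.
case vB: (v \in B); first by exists v => //; exact: connect0.
have [b bB cyb] := IH y pp lp.
exists b => //; apply: (connect_trans (y:=y)) => //; apply: connect1.
by rewrite /hB /del_block_edges evy vB.
Qed.

End Blocks.
Section Steiner.
Variable T : finType.
Variable e : rel T.
Hypothesis se : symmetric e.
Hypothesis ie : irreflexive e.
Hypothesis bg : block_graph e.
Hypothesis cg : connected_graph e.
Implicit Types (A B S U : {set T}) (F : {set {set T}}).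

Definition D B S := [set b in B | [exists s in S, connect (hB e B) b s]].

Lemma pair_edge x z a b : [set x; z] = [set a; b] -> e a b -> e x z.
Proof.
move=> E eab.
have xin : x \in [set a; b] by rewrite -E !inE eqxx.
have zin : z \in [set a; b] by rewrite -E !inE eqxx orbT.
have ain : a \in [set x; z] by rewrite E !inE eqxx.
have bin : b \in [set x; z] by rewrite E !inE eqxx orbT.
move: xin zin; rewrite !inE => /orP[]/eqP xa /orP[]/eqP za; subst x z => //.
- by move: bin; rewrite !inE orbb => /eqP eb; move: eab; rewrite eb ie.
- by rewrite se.
- by move: ain; rewrite !inE orbb => /eqP ea; move: eab; rewrite ea ie.
Qed.

Lemma adm_edge S U F x z : steiner_admissible e S (U, F) -> [set x; z] \in F -> e x z.
Proof.
case/and3P=> _ /forallP/(_ [set x; z]) H _ xzF; move: H; rewrite xzF /=.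
case/existsP=> a /existsP[b /and4P[/eqP E eab _ _]].
exact: pair_edge E eab.
Qed.

Definition FB F B := [set f in F | f \subset B].

Lemma sum_FB S U F : steiner_admissible e S (U, F) ->
  \sum_(B | is_block e B) #|FB F B| <= #|F|.
Proof.
move=> adm.
have E : forall B, #|FB F B| = \sum_(f in F) (f \subset B).
  move=> B; rewrite -sum1dep_card big_mkcondr /=; apply: eq_bigr => f _.
  by case: (f \subset B).
under eq_bigr do rewrite E.
rewrite exchange_big /= -sum1_card; apply: leq_sum => f fF.
rewrite -big_mkcondr /= sum1dep_card.
case/and3P: adm => _ /forallP/(_ f); rewrite fF /= => /existsP[x /existsP[y]].
case/and4P=> /eqP fE exy _ _ _.
have nxy : x != y by apply/eqP => xy; move: exy; rewrite xy ie.
apply/card_le1_eqP => B1 B2; rewrite !inE => /andP[b1 s1] /andP[b2 s2].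
have x1 : x \in B1 by apply: (subsetP s1); rewrite fE !inE eqxx.
have y1 : y \in B1 by apply: (subsetP s1); rewrite fE !inE eqxx orbT.
have x2 : x \in B2 by apply: (subsetP s2); rewrite fE !inE eqxx.
have y2 : y \in B2 by apply: (subsetP s2); rewrite fE !inE eqxx orbT.
by apply/esym; exact: (block_unique se b1 b2 nxy).
Qed.

Lemma D_FB S U F B : steiner_admissible e S (U, F) -> is_block e B ->
  #|D B S| <= #|FB F B| + 1.
Proof.
move=> adm bB.
have [D0|/set0Pn[d0 d0D]] := eqVneq (D B S) set0; first by rewrite D0 cards0.
set r := fun a b => [set a; b] \in FB F B.
set relF := fun a b => [set a; b] \in F.
have H : forall x y, connect relF x y -> forall bx by_, bx \in B -> by_ \in B ->
    connect (hB e B) x bx -> connect (hB e B) y by_ -> connect r bx by_.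
  move=> x y /connectP[p pp ->] {y}; elim: p x pp => [|z p IH] x /=.
    move=> _ bx by_ bxB byB cx cy; have -> : bx = by_; last exact: connect0.
    apply: (branch_sep se bg bB bxB byB); apply: (connect_trans (y:=x)).
      by rewrite csym //; apply: hB_sym.
    exact: cy.
  case/andP=> xz pp bx by_ bxB byB cx cy.
  have [bz bzB cz] := branch_exists (e:=e) z cg bB.
  apply: (connect_trans (y:=bz)); last exact: (IH z pp bz by_ bzB byB cz cy).
  have exz : e x z by apply: (adm_edge adm).
  have [xzB|nxzB] := boolP ((x \in B) && (z \in B)).
    case/andP: xzB => xB zB.
    have -> : bx = x by apply/esym/(branch_sep se bg bB).
    have -> : bz = z by apply/esym/(branch_sep se bg bB).
    by apply: connect1; rewrite /r inE (xz : [set x; z] \in F) /= subUset !sub1set xB zB.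
  have hxz : hB e B x z by rewrite /hB /del_block_edges exz nxzB.
  have -> : bx = bz; last exact: connect0.
  apply: (branch_sep se bg bB bxB bzB); apply: (connect_trans (y:=x)); first by rewrite csym //; apply: hB_sym.
  by apply: (connect_trans (y:=z)) => //; apply: connect1.
have subD : D B S \subset [set x | connect r d0 x].
  apply/subsetP => b; rewrite !inE => /andP[bB' /existsP[s /andP[sS cbs]]].
  move: d0D; rewrite inE => /andP[d0B /existsP[s0 /andP[s0S c0]]].
  case/and3P: adm => SU _ /forallP/(_ s0) /implyP.
  rewrite (subsetP SU _ s0S) => /(_ isT) /forallP/(_ s) /implyP.
  rewrite (subsetP SU _ sS) => /(_ isT) cs0s.
  by apply: (H s0 s cs0s) => //; rewrite csym //; apply: hB_sym.
apply: leq_trans (subset_leq_card subD) _.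
exact: grow_edges.
Qed.

Lemma lower S U F : steiner_admissible e S (U, F) ->
  \sum_(B | is_block e B) (#|D B S| - 1) <= #|F|.
Proof.
move=> adm; apply: leq_trans (sum_FB adm); apply: leq_sum => B bB.
by rewrite leq_subLR addnC; exact: (D_FB adm bB).
Qed.


Lemma path_hB B x p : path e x p -> all (fun v => v \notin B) p -> path (hB e B) x p.
Proof.
elim: p x => //= y p IH x /andP[exy pp] /andP[yB ap].
by rewrite /hB /del_block_edges exy (negbTE yB) andbF IH.
Qed.

Lemma split_G B p : forall x, path e x p -> all (fun v => v \notin B) p \/
  exists w q, [/\ w \in B, path e w q, last w q = last x p,
     all (fun v => v \notin B) q & size q < size p].
Proof.
elim: p => [|y p IH] x /=; first by left.
case/andP=> exy pp; case: (IH y pp) => [ap|[w [q [wB pq lq aq sq]]]].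
  case yB: (y \in B); last by left; rewrite ap.
  by right; exists y, p; split.
by right; exists w, q; split => //; rewrite ltnS ltnW.
Qed.

Lemma branch_incl B B' u b' y : is_block e B -> is_block e B' -> B != B' ->
  u \in B -> u \in B' -> b' \in B' -> b' != u -> connect (hB e B') b' y ->
  connect (hB e B) u y.
Proof.
move=> bB bB' nBB' uB uB' b'B' nbu /connectP[p pp ->].
have notB : forall z, z \in b' :: p -> z \notin B.
  move=> z zin; apply/negP => zB.
  have cbz : connect (hB e B') b' z := path_connect pp zin.
  have cbu : connect (hB e B') b' u.
    have [zu|zu] := eqVneq z u; first by rewrite -zu.
    apply: (connect_trans cbz); apply: connect1.
    rewrite /hB /del_block_edges (clique bg bB zB uB zu) uB' andbT /=.
    apply/negP => zB'; move/eqP: nBB'; apply.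
    exact: (block_unique se bB bB' zu).
  by move: nbu; rewrite (branch_sep se bg bB' b'B' uB' cbu) eqxx.
have ph : path (hB e B) b' p.
  apply: path_hB; first by apply: sub_path pp => ? ?; apply: hB_e.
  by apply/allP => z zp; apply: notB; rewrite inE zp orbT.
apply: (connect_trans (y:=b')); last exact: (path_connect ph (mem_last _ _)).
apply: connect1; rewrite /hB /del_block_edges.
rewrite (clique bg bB' uB' b'B') 1?eq_sym //=.
by rewrite (negbTE (notB b' (mem_head _ _))) andbF.
Qed.

Section Upper.
Variable S : {set T}.
Variable s0 : T.
Hypothesis s0S : s0 \in S.

Definition IB B := is_block e B && (1 < #|D B S|).
Definition ctr B := odflt s0 [pick x in D B S].
Definition star B := [set [set ctr B; b] | b in D B S :\ ctr B].
Definition Fu := \bigcup_(B | IB B) star B.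
Definition Uu := S :|: \bigcup_(B | IB B) D B S.
Definition relF a b := [set a; b] \in Fu.

Lemma ctr_in B : 0 < #|D B S| -> ctr B \in D B S.
Proof.
rewrite /ctr; case: pickP => [x xD|H] //=.
by rewrite (eq_card0 H).
Qed.

Lemma relF_sym : symmetric relF.
Proof. by move=> a b; rewrite /relF setUC. Qed.

Lemma D_B B u : u \in D B S -> u \in B.
Proof. by rewrite inE => /andP[]. Qed.

Lemma star_conn B u : IB B -> u \in D B S -> connect relF u (ctr B).
Proof.
move=> IBB uD; have [->|nuc] := eqVneq u (ctr B); first exact: connect0.
apply: connect1; rewrite /relF setUC; apply/bigcupP; exists B => //.
by apply/imsetP; exists u; rewrite // in_setD1 nuc uD.
Qed.

Lemma D_conn B u w : IB B -> u \in D B S -> w \in D B S -> connect relF u w.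
Proof.
move=> IBB uD wD; apply: (connect_trans (star_conn IBB uD)).
by rewrite csym; [exact: star_conn|exact: relF_sym].
Qed.

Lemma u_in_D B u : u \in Uu -> is_block e B -> u \in B -> u \in D B S.
Proof.
move=> uU bB uB; case uS: (u \in S).
  by rewrite inE uB /=; apply/existsP; exists u; rewrite uS connect0.
move: uU; rewrite inE uS /= => /bigcupP[B' /andP[bB' D2] uD'].
have [<-//|nBB] := eqVneq B' B.
case/card_gt1P: D2 => x [y [xD yD nxy]].
set b' := if x == u then y else x.
have b'D : b' \in D B' S by rewrite /b'; case: (x == u).
have nbu : b' != u by rewrite /b'; case: (eqVneq x u) => [<-|//]; rewrite eq_sym.
move: (b'D); rewrite inE => /andP[b'B' /existsP[s /andP[sS cs]]].
rewrite inE uB /=; apply/existsP; exists s; rewrite sS /=.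
apply: (branch_incl bB bB' _ uB (D_B uD') b'B' nbu cs).
by rewrite eq_sym.
Qed.

Lemma conn_main n : forall u p, size p <= n -> u \in Uu -> path e u p ->
  last u p \in S -> connect relF u (last u p).
Proof.
elim: n => [|n IH] u [|x p] //= sp uU; try by move=> *; exact: connect0.
case/andP=> eux pp lS.
have [B [bB uB xB]] := block_exists se eux.
have [w [q [wB pq lq aq sq]]] : exists w q, [/\ w \in B, path e w q,
    last w q = last x p, all (fun v => v \notin B) q & size q <= size p].
  case: (split_G B pp) => [ap|[w [q [wB pq lq aq sq]]]].
    by exists x, p; split.
  by exists w, q; split => //; rewrite ltnW.
have [wu|wu] := eqVneq w u.
  subst w; rewrite -lq; apply: IH => //; first exact: leq_trans sq sp.
  by rewrite lq.
have wD : w \in D B S.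
  rewrite inE wB /=; apply/existsP; exists (last w q); rewrite lq lS /= -lq.
  by apply: (path_connect (path_hB pq aq)); exact: mem_last.
have uD := u_in_D uU bB uB.
have IBB : IB B by rewrite /IB bB; apply/card_gt1P; exists u, w; rewrite eq_sym.
have wU : w \in Uu by rewrite inE; apply/orP; right; apply/bigcupP; exists B.
apply: (connect_trans (D_conn IBB uD wD)); rewrite -lq.
apply: IH => //; first exact: leq_trans sq sp.
by rewrite lq.
Qed.

Lemma adm_Uu : steiner_admissible e S (Uu, Fu).
Proof.
apply/and3P; split => /=.
- exact: subsetUl.
- apply/forallP => f; apply/implyP => /bigcupP[B IBB /imsetP[b bD ->]].
  have cD : ctr B \in D B S by apply: ctr_in; case/andP: IBB => _ /ltnW.
  move: bD; rewrite in_setD1 => /andP[bc bD].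
  apply/existsP; exists (ctr B); apply/existsP; exists b.
  case/andP: (IBB) => bB _.
  rewrite eqxx (clique bg bB (D_B cD) (D_B bD)) 1?eq_sym //=.
  by rewrite !inE; apply/andP; split; apply/orP; right; apply/bigcupP; exists B.
have toS : forall x, x \in Uu -> connect relF x s0.
  move=> x xU; have := forallP cg x => /forallP/(_ s0) /connectP[p pp lp].
  by rewrite lp; apply: (conn_main (leqnn _)) => //; rewrite -lp.
apply/forallP => x; apply/implyP => xU; apply/forallP => y; apply/implyP => yU.
apply: (connect_trans (toS x xU)); rewrite csym; [exact: toS|exact: relF_sym].
Qed.

Lemma card_bigcup_le (I : finType) (P : pred I) (A : I -> {set {set T}}) :
  #|\bigcup_(i | P i) A i| <= \sum_(i | P i) #|A i|.
Proof.
apply: (big_rec2 (fun (X : {set {set T}}) n => #|X| <= n)); first by rewrite cards0.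
move=> i X n _ H; rewrite cardsU; apply: leq_trans (leq_subr _ _) _.
by rewrite leq_add2l.
Qed.

Lemma card_Fu : #|Fu| <= \sum_(B | is_block e B) (#|D B S| - 1).
Proof.
apply: leq_trans (card_bigcup_le _ _) _.
rewrite /IB big_mkcondr /=; apply: leq_sum => B bB; case: ifP => // h.
have cD : ctr B \in D B S by apply: ctr_in; apply: ltnW.
apply: leq_trans (leq_imset_card _ _) _.
by rewrite (cardsD1 (ctr B) (D B S)) cD add1n subn1 /=.
Qed.

End Upper.

Lemma bigmin_le (I : finType) (P : pred I) (F : I -> nat) d i0 : P i0 ->
  \big[minn/d]_(i | P i) F i <= F i0.
Proof.
move=> Pi0; have : i0 \in index_enum I by rewrite mem_index_enum.
elim: (index_enum I) => //= j r IH; rewrite inE big_cons.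
case/orP => [/eqP <-|i0r]; first by rewrite Pi0 geq_minl.
case: ifP => _; last exact: IH.
by apply: leq_trans (geq_minr _ _) (IH i0r).
Qed.

Lemma steiner_formula S : S != set0 ->
  steiner_dist e S = \sum_(B | is_block e B) (#|D B S| - 1).
Proof.
case/set0Pn => s0 s0S.
set X := \sum_(B | is_block e B) (#|D B S| - 1).
have adm := adm_Uu s0S.
have lowX : X <= #|Fu S s0| := lower adm.
apply/eqP; rewrite eqn_leq; apply/andP; split.
  rewrite /steiner_dist; apply: leq_trans (bigmin_le _ _ adm) _.
  exact: card_Fu S s0.
rewrite /steiner_dist; apply: (big_ind (fun m => X <= m)).
- by apply: leq_trans lowX _; apply: max_card.
- by move=> a b Ha Hb; rewrite leq_min Ha Hb.
by case=> U F /= admUF; apply: lower admUF.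
Qed.

End Steiner.
Section Count.
Variable T : finType.
Variable h : rel T.
Hypothesis hs : symmetric h.
Implicit Types (A R S X Y : {set T}).

Definition comp x := [set y | connect h x y].
Local Notation C := (components h).

Lemma comp_in x : comp x \in C.
Proof. by apply/imsetP; exists x. Qed.

Lemma comp_self x : x \in comp x.
Proof. by rewrite inE connect0. Qed.

Lemma compE X y : X \in C -> y \in X -> X = comp y.
Proof.
case/imsetP => x _ -> yx; apply/setP => z; rewrite !inE.
move: yx; rewrite inE => cxy; apply/idP/idP => H.
  by apply: connect_trans H; rewrite csym.
exact: connect_trans cxy H.
Qed.

Lemma compU X Y y : X \in C -> Y \in C -> y \in X -> y \in Y -> X = Y.
Proof. by move=> XC YC yX yY; rewrite (compE XC yX) (compE YC yY). Qed.

Lemma cover_C : cover C = setT.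
Proof.
apply/setP => x; rewrite inE; apply/bigcupP; exists (comp x); [exact: comp_in|exact: comp_self].
Qed.

Lemma card_split S : #|S| = \sum_(X in C) #|S :&: X|.
Proof.
rewrite -sum1_card (partition_big comp (fun X => X \in C)) /=; last by move=> x _; exact: comp_in.
apply: eq_bigr => X XC; rewrite sum1dep_card; apply: eq_card => x; rewrite !inE.
apply/idP/idP => [/andP[xS /eqP <-]|/andP[xS xX]].
  by rewrite xS comp_self.
by rewrite xS -(compE XC xX) eqxx.
Qed.

Lemma CL (l : {set T} -> nat) : forall P : {set {set T}}, P \subset C ->
  #|[set A : {set T} | (A \subset cover P) && [forall X in P, #|A :&: X| == l X]]| =
  \prod_(X in P) 'C(#|X|, l X).
Proof.
move=> P; have [n] := ubnP #|P|; elim: n P => // n IH P ltP PC.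
have [->|[X0 X0P]] := set_0Vmem P.
  rewrite big_set0 /cover big_set0 -(cards1 (@set0 T)); apply: eq_card => A.
  rewrite !inE subset0; case: eqVneq => //= ->; apply/forallP => X.
  by rewrite inE.
set P' := P :\ X0.
have P'C : P' \subset C by apply: subset_trans PC; apply: subsetDl.
have ltP' : #|P'| < n by move: ltP; rewrite (cardsD1 X0 P) X0P add1n ltnS.
rewrite (big_setD1 _ X0P) /= -/P' -IH // -cards_draws -cardsX.
set K := cover P'.
have covP : cover P = X0 :|: K by rewrite /cover (big_setD1 _ X0P).
have X0C : X0 \in C := subsetP PC _ X0P.
have disjY : forall Y x, Y \in P' -> x \in X0 -> x \in Y -> False.
  move=> Y x; rewrite in_setD1 => /andP[YX0 YP] xX0 xY.
  by move: YX0; rewrite (compU (subsetP PC _ YP) X0C xY xX0) eqxx.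
have disj : forall x, x \in X0 -> x \in K -> False.
  by move=> x xX0 /bigcupP[Y YP' xY]; apply: (disjY Y x).
have YK : forall Y, Y \in P' -> Y \subset K by move=> Y YP; apply: bigcup_sup.
have capX0 : forall A R, A \subset X0 -> R \subset K -> (A :|: R) :&: X0 = A.
  move=> A R AX RK; apply/setP => x; rewrite !inE.
  case xA: (x \in A); first by rewrite (subsetP AX _ xA).
  case xR: (x \in R) => //=; apply/negP => xX; apply: (disj x xX).
  exact: (subsetP RK).
have capK : forall A R, A \subset X0 -> R \subset K -> (A :|: R) :&: K = R.
  move=> A R AX RK; apply/setP => x; rewrite !inE.
  case xR: (x \in R); first by rewrite (subsetP RK _ xR) orbT.
  case xA: (x \in A) => //=; apply/negP => xK; apply: (disj x _ xK).
  exact: (subsetP AX).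
rewrite -(card_in_imset (f := fun pr : {set T} * {set T} => pr.1 :|: pr.2)).
  apply: eq_card => A; apply/idP/idP.
    rewrite inE => /andP[AP /forallP HA]; apply/imsetP.
    exists (A :&: X0, A :&: K).
      rewrite !inE subsetIr /= (eqP (implyP (HA X0) X0P)) eqxx /= subsetIr /=.
      apply/forallP => Y; apply/implyP => YP.
      have := implyP (HA Y) (subsetP (subsetDl P [set X0]) _ YP).
      by rewrite -setIA (setIidPr (YK Y YP)).
    rewrite /= -setIUr -covP; apply/esym/setIidPl; exact: AP.
  case/imsetP => [[A1 R1]]; rewrite !inE /= => /andP[/andP[AX1 /eqP cA1] /andP[RK1 /forallP HR1]] ->.
  rewrite covP setUSS //=; apply/forallP => X; apply/implyP => XP.
  have [->|XX0] := eqVneq X X0; first by rewrite capX0 // cA1.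
  have XP' : X \in P' by rewrite in_setD1 XX0.
  rewrite setIUl.
  have -> : A1 :&: X = set0.
    apply/setP => x; rewrite !inE; apply/negP => /andP[xA xX].
    exact: (disjY X x XP' (subsetP AX1 _ xA) xX).
  by rewrite set0U; apply: (implyP (HR1 X) XP').
move=> [A R] [A' R']; rewrite !inE /= => /andP[/andP[AX _] /andP[RK _]].
move=> /andP[/andP[AX' _] /andP[RK' _]] E.
have eA : A = A' by rewrite -(capX0 A R AX RK) /= E capX0.
have eR : R = R' by rewrite -(capK A R AX RK) /= E capK.
by rewrite eA eR.
Qed.

Lemma sum_profile k : 0 < k ->
  \sum_(S : {set T} | #|S| == k) (#|[set X in C | S :&: X != set0]| - 1) = Nprime h k.
Proof.
case: k => // k _; rewrite /Nprime; cbv zeta.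
case: ifP => hC; last first.
  apply: big1 => S _; apply/eqP; rewrite subn_eq0.
  apply: leq_trans (subset_leq_card (B := C) _) _; last by rewrite leqNgt hC.
  by apply/subsetP => X; rewrite inE => /andP[].
rewrite (bigID (fun S => [forall X in C, #|S :&: X| < k.+1])) /=.
rewrite [X in _ + X]big1 ?addn0; last first.
  move=> S /andP[/eqP cS /forallPn[X]]; rewrite negb_imply -leqNgt => /andP[XC kle].
  have SX : S :&: X = S by apply/eqP; rewrite eqEcard subsetIl cS kle.
  apply/eqP; rewrite subn_eq0.
  apply: leq_trans (subset_leq_card (B := [set X]) _) _; last by rewrite cards1.
  apply/subsetP => Y; rewrite !inE => /andP[YC /set0Pn[y]]; rewrite inE => /andP[yS yY].
  have yX : y \in X by move: yS; rewrite -SX inE => /andP[].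
  by rewrite (compU YC XC yY yX).
pose phi := fun S : {set T} =>
  [ffun X => inord (if X \in C then #|S :&: X| else 0)] : {ffun {set T} -> 'I_k.+1}.
rewrite (partition_big phi (fun l : {ffun {set T} -> 'I_k.+1} =>
   [forall X, (X \notin C) ==> (val (l X) == 0)] && (\sum_(X in C) val (l X) == k.+1))).
  apply: eq_bigr => l /andP[/forallP l0 /eqP lsum].
  transitivity (\sum_(S in [set A : {set T} | (A \subset cover C) &&
      [forall X in C, #|A :&: X| == (fun X => val (l X)) X]])
      (#|[set X in C | val (l X) != 0]| - 1)).
    have EQ : forall S, ((#|S| == k.+1) && [forall X in C, #|S :&: X| < k.+1]) && (phi S == l) =
        (S \in [set A : {set T} | (A \subset cover C) &&
          [forall X in C, #|A :&: X| == (fun X => val (l X)) X]]).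
      move=> S; rewrite inE cover_C subsetT /=; apply/idP/idP.
        case/andP => /andP[_ /forallP QS] /eqP <-.
        apply/forallP => X; apply/implyP => XC; rewrite ffunE XC inordK //.
        exact: (implyP (QS X) XC).
      move/forallP => H.
      have HX : forall X, X \in C -> #|S :&: X| = l X.
        by move=> X XC; apply/eqP; exact: (implyP (H X) XC).
      rewrite -andbA; apply/and3P; split.
      + rewrite card_split; apply/eqP; rewrite -lsum; apply: eq_bigr => X XC; exact: HX.
      + by apply/forallP => X; apply/implyP => XC; rewrite HX.
      apply/eqP/ffunP => X; apply: val_inj; rewrite ffunE /=; case XC: (X \in C).
        by rewrite HX // inord_val.
      by rewrite inordK // (eqP (implyP (l0 X) (negbT XC))).
    apply: eq_big => S; first exact: EQ.
    rewrite EQ inE cover_C subsetT /= => /forallP H.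
    congr (_ - 1); apply: eq_card => X; rewrite !inE; case XC: (X \in C) => //=.
    by rewrite -(eqP (implyP (H X) XC)) -cards_eq0.
  by rewrite sum_nat_const (CL (fun X => val (l X))).
move=> S /andP[/eqP cS /forallP QS]; apply/andP; split.
  by apply/forallP => X; apply/implyP => XC; rewrite ffunE /= (negbTE XC) inordK.
apply/eqP; transitivity #|S|; last exact: cS.
rewrite card_split; apply: eq_bigr => X XC; rewrite ffunE /= XC inordK //.
exact: (implyP (QS X) XC).
Qed.

End Count.

Lemma D_comp (T : finType) (e : rel T) (B S : {set T}) :
  symmetric e -> block_graph e -> connected_graph e -> is_block e B ->
  #|D e B S| = #|[set X in components (hB e B) | S :&: X != set0]|.
Proof.
move=> se bg cg bB.
have hs := hB_sym se B.
rewrite -(card_in_imset (f := comp (hB e B)) (D := D e B S)); last first.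
  move=> b b' bD b'D E.
  apply: (branch_sep se bg bB (D_B bD) (D_B b'D)).
  by have := comp_self (hB e B) b'; rewrite -E inE.
apply: eq_card => X; apply/idP/idP.
  case/imsetP => b bD ->; rewrite inE comp_in /=.
  move: bD; rewrite inE => /andP[_ /existsP[s /andP[sS cs]]].
  by apply/set0Pn; exists s; rewrite !inE sS cs.
rewrite inE => /andP[XC /set0Pn[y]]; rewrite inE => /andP[yS yX].
have [b bB' cyb] := branch_exists y cg bB.
apply/imsetP; exists b.
  by rewrite inE bB' /=; apply/existsP; exists y; rewrite yS /= csym.
apply: (compU hs XC (comp_in _ _) yX); rewrite inE csym //.
Qed.

Theorem theorem1 (T : finType) (e : rel T) (k : nat) :
  simple_graph e -> connected_graph e -> block_graph e -> 2 <= k ->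
  steiner_wiener e k =
  \sum_(B : {set T} | is_block e B) Nprime (del_block_edges e B) k.
Proof.
move=> [se ie] cg bg k2.
rewrite /steiner_wiener.
transitivity (\sum_(S : {set T} | #|S| == k) \sum_(B : {set T} | is_block e B)
   (#|[set X in components (hB e B) | S :&: X != set0]| - 1)).
  apply: eq_bigr => S /eqP cS.
  rewrite steiner_formula //; last by rewrite -card_gt0 cS ltnW.
  by apply: eq_bigr => B bB; rewrite D_comp.
rewrite exchange_big; apply: eq_bigr => B bB.
exact: (sum_profile (hB_sym se B) (ltnW k2)).
Qed.
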